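(* Let $\pi(m)=(1/2)^m$ for $m\in\mathbb{N}^+$ (and $\pi(m)=0$ otherwise), and let the proposal be $q(m,\{m+1\})=\theta=1-q(m,\{m-1\})$ for $m\in\mathbb{Z}$, with $\theta\in(0,1)$. Take $N=1$ and homogeneous weights $W_{m,1}=W=(b-\varepsilon)\,\mathrm{Ber}(s)+\varepsilon$ for all $m$, where $b>1$, $\varepsilon\in(0,1)$, $\mathrm{Ber}(s)$ is a Bernoulli random variable with parameter $s\in(0,1)$, and $s=\frac{1-\varepsilon}{b-\varepsilon}$ so that $\mathbb{E}[W]=1$. Then there exist values of $b$, $\varepsilon$ and $\theta$ for which the Markov chain generated by the noisy kernel $\tilde P_1$ is transient.
   Context: Noisy Metropolis–Hastings kernel $\tilde P_N$: from state $m$, propose $Y\sim q(m,\cdot)$, draw independent weights $W\sim Q_{m,N}$, $U\sim Q_{Y,N}$ (the laws of $W_{m,N}$, $W_{Y,N}$), and move to $Y$ with probability $\min\{1,\frac{\pi(Y)q(Y,m)}{\pi(m)q(m,Y)}\cdot\frac{U}{W}\}$, otherwise stay at $m$ (proposals outside $\mathbb{N}^+$ have $\pi(Y)=0$ and are rejected). *)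

(* Defs.v *)
From Stdlib Require Import Reals ZArith List.
Import ListNotations.
Open Scope R_scope.

Definition lsum {A : Type} (f : A -> R) (l : list A) : R :=
  fold_right (fun a acc => f a + acc) 0 l.

(* law of a finitely supported nonnegative weight: list of (value, probability) *)
Definition wlaw := list (R * R).

(* Expected acceptance probability of the noisy MH kernel when at x proposing y:
   E[ min{1, pi(y)q(y,x)/(pi(x)q(x,y)) * U/W} ], W ~ Q x, U ~ Q y independent. *)
Definition noisy_acc (pi : Z -> R) (q : Z -> Z -> R) (Q : Z -> wlaw) (x y : Z) : R :=
  lsum (fun wp => lsum (fun up =>
     snd wp * snd up *
     Rmin 1 ((pi y * q y x) / (pi x * q x y) * (fst up / fst wp))) (Q y)) (Q x).

(* Noisy Metropolis-Hastings kernel; the proposal q(x,.) is supported on the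
   finite duplicate-free list [prop x] (not containing x). *)
Definition noisy_MH (pi : Z -> R) (q : Z -> Z -> R) (prop : Z -> list Z)
    (Q : Z -> wlaw) (x y : Z) : R :=
  lsum (fun z => q x z * noisy_acc pi q Q x z * (if Z.eq_dec z y then 1 else 0)) (prop x)
  + (if Z.eq_dec x y then 1 - lsum (fun z => q x z * noisy_acc pi q Q x z) (prop x) else 0).

(* First-passage (taboo) probabilities for a kernel P whose row P(x,.) is
   supported on the list [supp x]:  fp n x y = P_x(first hitting time of y
   at steps >= 1 equals n). *)
Fixpoint first_passage (P : Z -> Z -> R) (supp : Z -> list Z) (n : nat) (x y : Z) : R :=
  match n with
  | O => 0
  | S O => P x y
  | S n' => lsum (fun z => if Z.eq_dec z y then 0 else P x z * first_passage P supp n' z y)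
                 (nodup Z.eq_dec (supp x))
  end.

Definition return_prob_is (P : Z -> Z -> R) (supp : Z -> list Z) (x : Z) (l : R) : Prop :=
  infinite_sum (fun n => first_passage P supp (S n) x x) l.

Definition transient_chain (P : Z -> Z -> R) (supp : Z -> list Z) (S : Z -> Prop) : Prop :=
  forall x, S x -> exists l, return_prob_is P supp x l /\ l < 1.

Definition pi_ex (m : Z) : R := if Z.ltb 0 m then (1/2) ^ (Z.to_nat m) else 0.

Definition q_ex (theta : R) (x y : Z) : R :=
  if Z.eq_dec y (x + 1) then theta
  else if Z.eq_dec y (x - 1) then 1 - theta else 0.

Definition prop_ex (x : Z) : list Z := [x + 1; x - 1]%Z.

Definition W_ex (b eps : R) : wlaw :=
  let s := (1 - eps) / (b - eps) in [(b, s); (eps, 1 - s)].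

Definition P_ex (b eps theta : R) : Z -> Z -> R :=
  noisy_MH pi_ex (q_ex theta) prop_ex (fun _ => W_ex b eps).

Definition supp_ex (x : Z) : list Z := x :: prop_ex x.

(* Main.v *)
Require Import Defs.
From Stdlib Require Import Reals ZArith List Lra Lia.
Import ListNotations.
Open Scope R_scope.
Lemma lsum_plus {A} (f g : A -> R) l : lsum (fun a => f a + g a) l = lsum f l + lsum g l.
Proof. induction l; simpl; [lra|rewrite IHl; lra]. Qed.

Lemma lsum_ext {A} (f g : A -> R) l : (forall a, In a l -> f a = g a) -> lsum f l = lsum g l.
Proof. induction l; simpl; intros H; auto. rewrite H by auto. rewrite IHl; auto. Qed.

Lemma lsum_le {A} (f g : A -> R) l : (forall a, In a l -> f a <= g a) -> lsum f l <= lsum g l.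
Proof. induction l; simpl; intros H; [lra|]. assert (f a <= g a) by auto.
  assert (lsum f l <= lsum g l) by auto. lra. Qed.

Lemma lsum_nonneg {A} (f : A -> R) l : (forall a, In a l -> 0 <= f a) -> 0 <= lsum f l.
Proof. induction l; simpl; intros H; [lra|].
  assert (0 <= f a) by auto. assert (0 <= lsum f l) by auto. lra. Qed.

Section G.
Variable P : Z -> Z -> R.
Variable supp : Z -> list Z.
Variable y : Z.

Fixpoint U (n : nat) (w : Z) : R :=
  match n with O => 0 | S n' => U n' w + first_passage P supp (S n') w y end.

Lemma fp_SS k w : first_passage P supp (S (S k)) w y =
  lsum (fun z => if Z.eq_dec z y then 0 else P w z * first_passage P supp (S k) z y)
       (nodup Z.eq_dec (supp w)).
Proof. reflexivity. Qed.

Lemma U_rec n w : U (S n) w = P w y +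
  lsum (fun z => if Z.eq_dec z y then 0 else P w z * U n z) (nodup Z.eq_dec (supp w)).
Proof.
  revert w; induction n; intros w.
  - simpl. rewrite (lsum_ext _ (fun _ => 0)).
    + clear. induction (nodup Z.eq_dec (supp w)); simpl; lra.
    + intros; destruct Z.eq_dec; lra.
  - change (U (S (S n)) w) with (U (S n) w + first_passage P supp (S (S n)) w y).
    rewrite IHn, fp_SS. rewrite Rplus_assoc, <- lsum_plus. f_equal.
    apply lsum_ext; intros a _. destruct Z.eq_dec; simpl; lra.
Qed.

Hypothesis Pnn : forall w z, 0 <= P w z.

Lemma fp_nonneg n w : 0 <= first_passage P supp n w y.
Proof.
  revert w; induction n as [|[|n] IH]; intros w; simpl; try lra; auto.
  apply lsum_nonneg; intros a _. destruct Z.eq_dec; [lra|].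
  apply Rmult_le_pos; auto. apply IH.
Qed.

Variable h : Z -> R.
Hypothesis hnn : forall z, 0 <= h z.
Hypothesis H2 : forall w, w <> y ->
  P w y + lsum (fun z => if Z.eq_dec z y then 0 else P w z * h z) (nodup Z.eq_dec (supp w)) <= h w.
Variable c : R.
Hypothesis Hc : P y y + lsum (fun z => if Z.eq_dec z y then 0 else P y z * h z) (nodup Z.eq_dec (supp y)) <= c.
Hypothesis Hc1 : c < 1.

Lemma U_le n w : w <> y -> U n w <= h w.
Proof.
  revert w; induction n; intros w Hw.
  - simpl; auto.
  - rewrite U_rec. eapply Rle_trans; [|apply H2; auto].
    apply Rplus_le_compat_l, lsum_le; intros a _. destruct Z.eq_dec; [lra|].
    apply Rmult_le_compat_l; auto.
Qed.

Lemma U_y n : U n y <= c.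
Proof.
  destruct n. simpl. eapply Rle_trans; [|apply Hc].
  pose proof (Pnn y y). assert (0 <= lsum (fun z => if Z.eq_dec z y then 0 else P y z * h z) (nodup Z.eq_dec (supp y))); [|lra].
  apply lsum_nonneg; intros a _; destruct Z.eq_dec; [lra|]; apply Rmult_le_pos; auto.
  rewrite U_rec. eapply Rle_trans; [|apply Hc].
  apply Rplus_le_compat_l, lsum_le; intros a _. destruct Z.eq_dec; [lra|].
  apply Rmult_le_compat_l; auto. apply U_le; auto.
Qed.

Lemma sum_U N : sum_f_R0 (fun n => first_passage P supp (S n) y y) N = U (S N) y.
Proof. induction N. simpl. lra. change (sum_f_R0 (fun n => first_passage P supp (S n) y y) (S N)) with (sum_f_R0 (fun n => first_passage P supp (S n) y y) N + first_passage P supp (S (S N)) y y). rewrite IHN. reflexivity. Qed.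

Lemma transient_at : exists l, return_prob_is P supp y l /\ l < 1.
Proof.
  set (Un := sum_f_R0 (fun n => first_passage P supp (S n) y y)).
  assert (Hg : Un_growing Un).
  { intros n. unfold Un. rewrite !sum_U. pose proof (fp_nonneg (S (S n)) y). change (U (S (S n)) y) with (U (S n) y + first_passage P supp (S (S n)) y y). lra. }
  assert (Hb : has_ub Un).
  { exists c. intros x [n ->]. unfold Un. rewrite sum_U. apply U_y. }
  destruct (growing_cv Un Hg Hb) as [l Hl].
  exists l. split.
  - exact Hl.
  - assert (l <= c).
    { apply (Rle_cv_lim (Un := Un) (Vn := fun _ => c)); auto.
      - intros n; unfold Un; rewrite sum_U; apply U_y.
      - intros e He; exists O; intros; unfold Rdist. rewrite Rminus_diag, Rabs_R0; lra. }
    lra.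
Qed.
End G.
Definition th : R := 8/9.
Definition Wl := W_ex 4 (1/4).
Definition A x y := noisy_acc pi_ex (q_ex th) (fun _ => Wl) x y.

Lemma Wl_eq : Wl = [(4, 1/5); (1/4, 4/5)].
Proof. unfold Wl, W_ex. cbv zeta. replace ((1 - 1/4)/(4-1/4)) with (1/5) by field. replace (1-1/5) with (4/5) by field. reflexivity. Qed.

Definition Fr r := 1/5*(1/5)*Rmin 1 (r*(4/4)) + (1/5*(4/5)*Rmin 1 (r*((1/4)/4)) + 0)
  + ((4/5*(1/5)*Rmin 1 (r*(4/(1/4))) + (4/5*(4/5)*Rmin 1 (r*((1/4)/(1/4))) + 0)) + 0).

Lemma A_eq x y : A x y = Fr ((pi_ex y * q_ex th y x) / (pi_ex x * q_ex th x y)).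
Proof. unfold A, noisy_acc. rewrite Wl_eq. unfold Fr. cbn [lsum fold_right fst snd]. reflexivity. Qed.

Lemma Fr0 : Fr 0 = 0.
Proof. unfold Fr. rewrite !Rmult_0_l. unfold Rmin. destruct Rle_dec; lra. Qed.

Lemma Rmin_r a : a <= 1 -> Rmin 1 a = a.
Proof. intros; unfold Rmin; destruct Rle_dec; lra. Qed.
Lemma Rmin_l a : 1 <= a -> Rmin 1 a = 1.
Proof. intros; unfold Rmin; destruct Rle_dec; lra. Qed.

Lemma Fr16 : Fr (1/16) = 13/64.
Proof. unfold Fr. rewrite (Rmin_r (1/16*(4/4))) by lra. rewrite (Rmin_r (1/16*((1/4)/4))) by lra.
 rewrite (Rmin_r (1/16*(4/(1/4)))) by lra. rewrite (Rmin_r (1/16*((1/4)/(1/4)))) by lra. lra. Qed.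

Lemma Fr_16 : Fr 16 = 1.
Proof. unfold Fr. rewrite (Rmin_l (16*(4/4))) by lra. rewrite (Rmin_l (16*((1/4)/4))) by lra.
 rewrite (Rmin_l (16*(4/(1/4)))) by lra. rewrite (Rmin_l (16*((1/4)/(1/4)))) by lra. lra. Qed.

Lemma pi_pos m : (0 < m)%Z -> 0 < pi_ex m.
Proof. intros H. unfold pi_ex. replace (Z.ltb 0 m) with true by (symmetry; apply Z.ltb_lt; lia).
  apply pow_lt; lra. Qed.
Lemma pi_np m : (m <= 0)%Z -> pi_ex m = 0.
Proof. intros H. unfold pi_ex. replace (Z.ltb 0 m) with false by (symmetry; apply Z.ltb_ge; lia). reflexivity. Qed.
Lemma pi_S m : (0 < m)%Z -> pi_ex (m+1) = pi_ex m / 2.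
Proof. intros H. unfold pi_ex. replace (Z.ltb 0 m) with true by (symmetry; apply Z.ltb_lt; lia).
  replace (Z.ltb 0 (m+1)) with true by (symmetry; apply Z.ltb_lt; lia).
  replace (Z.to_nat (m+1)) with (S (Z.to_nat m)) by lia. simpl. lra. Qed.

Lemma q_up t x : q_ex t x (x+1) = t.
Proof. unfold q_ex. destruct Z.eq_dec; [reflexivity|lia]. Qed.
Lemma q_dn t x : q_ex t x (x-1) = 1 - t.
Proof. unfold q_ex. destruct Z.eq_dec; [lia|]. destruct Z.eq_dec; [reflexivity|lia]. Qed.
Lemma q_up' t x : q_ex t (x+1) x = 1 - t.
Proof. unfold q_ex. destruct Z.eq_dec; [lia|]. destruct Z.eq_dec; [reflexivity|lia]. Qed.
Lemma q_dn' t x : q_ex t (x-1) x = t.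
Proof. unfold q_ex. destruct Z.eq_dec; [reflexivity|lia]. Qed.

Definition up w := th * A w (w+1).
Definition dn w := (1 - th) * A w (w-1).

Lemma up_pos w : (0 < w)%Z -> up w = 13/72.
Proof. intros H. unfold up. rewrite A_eq, q_up, q_up'. rewrite (pi_S w H).
  pose proof (pi_pos w H). unfold th.
  replace (pi_ex w / 2 * (1 - 8/9) / (pi_ex w * (8/9))) with (1/16) by (field; lra).
  rewrite Fr16. lra. Qed.

Lemma up_np w : (w <= 0)%Z -> up w = 0.
Proof. intros H. unfold up. rewrite A_eq, (pi_np w H), Rmult_0_l, Rdiv_0_r, Fr0. lra. Qed.

Lemma dn_2 w : (2 <= w)%Z -> dn w = 1/9.
Proof. intros H. unfold dn. rewrite A_eq, q_dn, q_dn'.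
  assert (E: pi_ex w = pi_ex (w-1)/2) by (rewrite <- pi_S by lia; f_equal; lia). rewrite E.
  pose proof (pi_pos (w-1) ltac:(lia)). unfold th.
  replace (pi_ex (w - 1) * (8/9) / (pi_ex (w - 1) / 2 * (1 - 8/9))) with 16 by (field; lra).
  rewrite Fr_16. lra. Qed.

Lemma dn_1 w : (w <= 1)%Z -> dn w = 0.
Proof. intros H. unfold dn. rewrite A_eq, (pi_np (w-1)) by lia. rewrite !Rmult_0_l, Rdiv_0_l, Fr0. lra. Qed.

Definition P := P_ex 4 (1/4) th.

Lemma P_gen w z : P w z =
  th * A w (w+1) * (if Z.eq_dec (w+1) z then 1 else 0) +
  ((1-th) * A w (w-1) * (if Z.eq_dec (w-1) z then 1 else 0) + 0) +
  (if Z.eq_dec w z then 1 - (th * A w (w+1) + ((1-th) * A w (w-1) + 0)) else 0).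
Proof. unfold P, P_ex, noisy_MH, prop_ex. cbn [lsum fold_right]. rewrite q_up, q_dn. reflexivity. Qed.

Lemma P_self w : P w w = 1 - up w - dn w.
Proof. rewrite P_gen. unfold up, dn. repeat destruct Z.eq_dec; try lia. lra. Qed.
Lemma P_up w : P w (w+1) = up w.
Proof. rewrite P_gen. unfold up, dn. repeat destruct Z.eq_dec; try lia. lra. Qed.
Lemma P_dn w : P w (w-1) = dn w.
Proof. rewrite P_gen. unfold up, dn. repeat destruct Z.eq_dec; try lia. lra. Qed.
Lemma P_far w z : z <> w -> z <> (w+1)%Z -> z <> (w-1)%Z -> P w z = 0.
Proof. intros. rewrite P_gen. repeat destruct Z.eq_dec; try lia. lra. Qed.

Lemma updn w : 0 <= up w /\ 0 <= dn w /\ up w + dn w <= 1.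
Proof. destruct (Z_le_gt_dec w 0).
  - rewrite up_np, dn_1 by lia. lra.
  - rewrite up_pos by lia. destruct (Z.eq_dec w 1). rewrite dn_1 by lia; lra. rewrite dn_2 by lia; lra. Qed.

Lemma P_nn w z : 0 <= P w z.
Proof. pose proof (updn w).
  destruct (Z.eq_dec z w). subst; rewrite P_self; lra.
  destruct (Z.eq_dec z (w+1)). subst; rewrite P_up; lra.
  destruct (Z.eq_dec z (w-1)). subst; rewrite P_dn; lra.
  rewrite P_far; auto; lra. Qed.

Lemma nodup_supp w : nodup Z.eq_dec (supp_ex w) = [w; (w+1)%Z; (w-1)%Z].
Proof. unfold supp_ex, prop_ex. simpl.
  repeat (destruct Z.eq_dec; try lia). reflexivity. Qed.

Definition h (y z : Z) : R := if Z_le_dec z y then 1 else (8/13) ^ (Z.to_nat (z - y)).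

Lemma h_le y z : (z <= y)%Z -> h y z = 1.
Proof. intros; unfold h; destruct Z_le_dec; [reflexivity|lia]. Qed.
Lemma h_S y z : (y < z)%Z -> h y (z+1) = 8/13 * h y z.
Proof. intros; unfold h; destruct Z_le_dec; try lia; destruct Z_le_dec; try lia.
  replace (Z.to_nat (z+1-y)) with (S (Z.to_nat (z - y))) by lia. reflexivity. Qed.
Lemma h_1 y : h y (y+1) = 8/13.
Proof. unfold h; destruct Z_le_dec; try lia. replace (Z.to_nat (y+1-y)) with 1%nat by lia. simpl; lra. Qed.
Lemma h_rng y z : 0 <= h y z <= 1.
Proof. unfold h; destruct Z_le_dec. lra. split. apply pow_le; lra. rewrite <- (pow1 (Z.to_nat (z-y))). apply pow_incr; lra. Qed.

Lemma H2_ex y : (1 <= y)%Z -> forall w, w <> y ->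
  P w y + lsum (fun z => if Z.eq_dec z y then 0 else P w z * h y z) (nodup Z.eq_dec (supp_ex w)) <= h y w.
Proof.
  intros Hy w Hw. rewrite nodup_supp. cbn [lsum fold_right].
  pose proof (updn w) as U. pose proof (h_rng y (w+1)). pose proof (h_rng y (w-1)).
  rewrite P_self, P_up, P_dn.
  destruct (Z_lt_le_dec w y).
  - rewrite (h_le y w) by lia. destruct (Z.eq_dec (w+1) y).
    + rewrite <- e at 1. rewrite P_up. repeat (destruct Z.eq_dec; try lia).
      assert (dn w * h y (w-1) <= dn w) by nra. lra.
    + rewrite P_far by lia. repeat (destruct Z.eq_dec; try lia).
      assert (dn w * h y (w-1) <= dn w) by nra. assert (up w * h y (w+1) <= up w) by nra. lra.
  - rewrite (h_S y w) by lia. rewrite up_pos, dn_2 by lia.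
    destruct (Z.eq_dec (w-1) y).
    + assert (Pwy: P w y = 1/9) by (replace y with (w-1)%Z by lia; rewrite P_dn, dn_2 by lia; reflexivity).
      assert (Hw1: h y w = 8/13) by (replace w with (y+1)%Z by lia; apply h_1).
      rewrite Pwy, Hw1.
      repeat (destruct Z.eq_dec; try lia). lra.
    + rewrite P_far by lia.
      assert (E: h y w = 8/13 * h y (w-1)) by (rewrite <- h_S by lia; f_equal; lia).
      rewrite E. repeat (destruct Z.eq_dec; try lia). lra.
Qed.

Lemma Hc_ex y : (1 <= y)%Z ->
  P y y + lsum (fun z => if Z.eq_dec z y then 0 else P y z * h y z) (nodup Z.eq_dec (supp_ex y)) <= 67/72.
Proof.
  intros Hy. rewrite nodup_supp. cbn [lsum fold_right].
  rewrite P_self, P_up, P_dn, h_1, (h_le y (y-1)) by lia. rewrite up_pos by lia.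
  repeat (destruct Z.eq_dec; try lia). lra.
Qed.


Theorem proposition2p2 :
  exists b eps theta : R,
    1 < b /\ 0 < eps < 1 /\ 0 < theta < 1 /\
    transient_chain (P_ex b eps theta) supp_ex (fun m => (0 < m)%Z).
Proof.
  exists 4, (1/4), th. split; [lra|]. split; [lra|]. split; [unfold th; lra|].
  intros x Hx. change (P_ex 4 (1/4) th) with P.
  apply (transient_at P supp_ex x P_nn (h x) (fun z => proj1 (h_rng x z)) (H2_ex x ltac:(lia)) (67/72) (Hc_ex x ltac:(lia))). lra.
Qed.
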